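(* Let $G_{12}$ be the graph with vertex set $\{1,\dots,12\}$ in which two distinct vertices are adjacent if and only if they both belong to one of the sets $\{1,4,7\}$, $\{2,4,5,6\}$, $\{2,4,6,7\}$, $\{2,4,6,9\}$, $\{2,4,9,12\}$, $\{2,5,8\}$, $\{2,6,7,11\}$, $\{2,11,12\}$, $\{3,6,9\}$, $\{4,5,6,10\}$, $\{4,10,12\}$, $\{6,10,11\}$, $\{10,11,12\}$. Then $G_{12}$ is not $\cup$-semi-weakly CIS, i.e., neither $G_{12}$ nor its complement is semi-weakly CIS.
   Context: A strong clique of a graph is a clique meeting every maximal stable set. A graph is semi-weakly CIS if it admits a family of strong cliques such that every two adjacent vertices lie together in some member. A graph is $\cup$-semi-weakly CIS if it or its complement is semi-weakly CIS. *)

(* Defs.v *)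
From mathcomp Require Import all_boot.
Set Implicit Arguments. Unset Strict Implicit. Unset Printing Implicit Defensive.

(* Simple graphs on a finite vertex type T are given by an adjacency relation
   e : rel T (intended symmetric and irreflexive). *)

Section Graphs.
Variable T : finType.
Variable e : rel T.

Definition stable (S : {set T}) : bool :=
  [forall x in S, forall y in S, ~~ e x y].

Definition clique (C : {set T}) : bool :=
  [forall x in C, forall y in C, (x != y) ==> e x y].

Definition maximal_stable (S : {set T}) : bool :=
  stable S && [forall S' : {set T}, (stable S' && (S \subset S')) ==> (S' == S)].

Definition strong_clique (C : {set T}) : bool :=
  clique C && [forall S : {set T}, maximal_stable S ==> (C :&: S != set0)].

Definition semi_weakly_CIS : Prop :=
  exists F : {set {set T}},
    (forall C, C \in F -> strong_clique C) /\
    (forall x y, e x y -> exists2 C, C \in F & (x \in C) && (y \in C)).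
End Graphs.

Definition compl_rel (T : finType) (e : rel T) : rel T :=
  fun x y => (x != y) && ~~ e x y.

Definition cup_semi_weakly_CIS (T : finType) (e : rel T) : Prop :=
  semi_weakly_CIS e \/ semi_weakly_CIS (compl_rel e).

(* The graph G_12: vertex i : 'I_12 stands for the integer i+1. *)
Definition G12_blocks : seq (seq nat) :=
  [:: [:: 1; 4; 7]; [:: 2; 4; 5; 6]; [:: 2; 4; 6; 7]; [:: 2; 4; 6; 9];
      [:: 2; 4; 9; 12]; [:: 2; 5; 8]; [:: 2; 6; 7; 11]; [:: 2; 11; 12];
      [:: 3; 6; 9]; [:: 4; 5; 6; 10]; [:: 4; 10; 12]; [:: 6; 10; 11];
      [:: 10; 11; 12]].

Definition G12 : rel 'I_12 :=
  fun x y => (x != y) &&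
    has (fun B => (x.+1 \in B) && (y.+1 \in B)) G12_blocks.

(* Main.v *)
Require Import Defs.
From mathcomp Require Import all_boot.
Set Implicit Arguments.

Lemma max_stableI (T : finType) (e : rel T) (S : {set T}) :
  stable e S -> [forall v, (v \notin S) ==> [exists u in S, e u v]] ->
  maximal_stable e S.
Proof.
move=> st /forallP dom; rewrite /maximal_stable st /=.
apply/forallP=> S'; apply/implyP=> /andP[st' sub].
rewrite eqEsubset; apply/andP; split=> //.
apply/subsetP=> v vS'; apply/negPn/negP=> vS.
have /existsP[u /andP[uS euv]] := implyP (dom v) vS.
have uS' : u \in S' by apply: (subsetP sub).
by move/forallP: st' => /(_ u) /implyP /(_ uS') /forallP /(_ v) /implyP /(_ vS') /negP.
Qed.

Definition okr {T : finType} (e : rel T) (u v : T) := (u != v) ==> e u v.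

Section Gen.
Variables (T : finType) (e : rel T) (r : seq T).
Hypothesis rall : forall x : T, x \in r.

Definition stab_chk (p : pred T) :=
  all (fun u => all (fun v => p u ==> p v ==> ~~ e u v) r) r.
Definition dom_chk (p : pred T) :=
  all (fun v => p v || has (fun u => p u && e u v) r) r.

Lemma stab_ok p : stab_chk p -> stable e [set x | p x].
Proof.
move/allP=> h; apply/forallP=> u; apply/implyP; rewrite inE => pu.
apply/forallP=> v; apply/implyP; rewrite inE => pv.
by have /allP/(_ v (rall v)) := h u (rall u); rewrite pu pv.
Qed.

Lemma dom_ok p : dom_chk p ->
  [forall v, (v \notin [set x | p x]) ==> [exists u in [set x | p x], e u v]].
Proof.
move/allP=> h; apply/forallP=> v; apply/implyP; rewrite inE => pv.
have := h v (rall v); rewrite (negbTE pv) /= => /hasP[u _ /andP[pu euv]].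
by apply/existsP; exists u; rewrite inE pu.
Qed.

Lemma no_swcis (x y : T) (p1 p2 : pred T) :
  e x y -> stab_chk p1 -> stab_chk p2 -> dom_chk p1 -> dom_chk p2 ->
  all (fun a => all (fun b => p1 a ==> p2 b ==>
     ~~ [&& okr e a b, okr e a x, okr e a y, okr e b x & okr e b y]) r) r ->
  ~ semi_weakly_CIS e.
Proof.
move=> exy s1 s2 d1 d2 /allP chk [F [HF Hcov]].
have [C CF /andP[xC yC]] := Hcov x y exy.
have /andP[cl /forallP sc] := HF C CF.
have /set0Pn[a] := implyP (sc _) (@max_stableI _ e _ (stab_ok _ s1) (dom_ok _ d1)).
have /set0Pn[b] := implyP (sc _) (@max_stableI _ e _ (stab_ok _ s2) (dom_ok _ d2)).
rewrite !inE => /andP[bC pb] /andP[aC pa].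
have ok : forall u v, u \in C -> v \in C -> okr e u v.
  move=> u v uC vC; move/forallP: cl => /(_ u) /implyP /(_ uC) /forallP /(_ v).
  by move/implyP/(_ vC).
have /allP/(_ b (rall b)) := chk a (rall a).
by rewrite pa pb !ok.
Qed.
End Gen.

Definition ords : seq 'I_12 :=
  [:: @Ordinal 12 0 isT; @Ordinal 12 1 isT; @Ordinal 12 2 isT; @Ordinal 12 3 isT;
      @Ordinal 12 4 isT; @Ordinal 12 5 isT; @Ordinal 12 6 isT; @Ordinal 12 7 isT;
      @Ordinal 12 8 isT; @Ordinal 12 9 isT; @Ordinal 12 10 isT; @Ordinal 12 11 isT].

Lemma ords_all (i : 'I_12) : i \in ords.
Proof.
by case: i => [[|[|[|[|[|[|[|[|[|[|[|[|m]]]]]]]]]]]] H].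
Qed.

Definition mk (s : seq nat) : pred 'I_12 := fun i => val i \in s.

Theorem proposition35 :
  ~ cup_semi_weakly_CIS G12.
Proof.
case.
- apply: (@no_swcis _ G12 ords ords_all (@Ordinal 12 1 isT) (@Ordinal 12 3 isT)
     (mk [:: 0; 2; 7; 9]) (mk [:: 0; 2; 4; 10])); by vm_compute.
- apply: (@no_swcis _ (compl_rel G12) ords ords_all (@Ordinal 12 0 isT) (@Ordinal 12 4 isT)
     (mk [:: 3; 9; 11]) (mk [:: 5; 9; 10])); by vm_compute.
Qed.
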